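(* Let $X_n$ be the compactification degree of a simple two-dimensional lattice path chosen uniformly at random among the $4^n$ paths of length $n\ge1$. Then for $r\ge0$, \[ \mathbb{P}(X_n=r)=4^{r+1-n}\sum_{\lambda\ge0}\lambda(-1)^{\lambda-1}\bigg[\binom{2n-1}{n-\lambda2^r}-\binom{2n-1}{n-\lambda2^r-1}\bigg], \] and \[ \mathbb{E}X_n=4^{-n}\sum_{k\ge1}8k\big(2^{v_2(k)}-1\big)\bigg[\binom{2n-1}{n-k}-\binom{2n-1}{n-k-1}\bigg], \] where $v_2(k)$ is the largest $\nu$ such that $2^\nu$ divides $k$, and binomial coefficients with negative lower index are $0$.
   Context: A simple two-dimensional lattice path is a finite nonempty word over the steps $\{\uparrow,\rightarrow,\downarrow,\leftarrow\}$; its length is the number of steps. The reduction $\Phi_L(\ell)$ of a path $\ell$ of length $\ge2$: first, if the first step of $\ell$ is vertical, the entire path is rotated by $90^\circ$ clockwise; then, if the last step is horizontal, this last step alone is rotated by $90^\circ$ clockwise. The resulting path decomposes uniquely as $H_1V_1\cdots H_kV_k$ ($k\ge1$) with each $H_i$ a nonempty maximal run of horizontal steps and each $V_i$ a nonempty maximal run of vertical steps. Each block $H_iV_i$ is replaced by $\nearrow$, $\searrow$, $\swarrow$, $\nwarrow$ according as ($H_i$ starts with $\rightarrow$, $V_i$ with $\uparrow$), ($\rightarrow$, $\downarrow$), ($\leftarrow$, $\downarrow$), ($\leftarrow$, $\uparrow$); the diagonal path is then rotated by $45^\circ$ clockwise, giving $\Phi_L(\ell)$ of length $k$. The compactification degree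 $\mathrm{cdeg}(\ell)$ of a path of length $\ge1$ is the number $m\ge0$ such that $\Phi_L^m(\ell)$ consists of a single step. *)

(* Defs.v *)
From HB Require Import structures.
From mathcomp Require Import all_boot all_order all_algebra.
Set Implicit Arguments. Unset Strict Implicit. Unset Printing Implicit Defensive.
Import Order.TTheory GRing.Theory Num.Theory.

Inductive step := SU | SR | SD | SL.

Definition step_to_ord (s : step) : 'I_4 :=
  match s with SU => inord 0 | SR => inord 1 | SD => inord 2 | SL => inord 3 end.
Definition ord_to_step (i : 'I_4) : step :=
  match val i with 0 => SU | 1 => SR | 2 => SD | _ => SL end.
Lemma step_ordK : cancel step_to_ord ord_to_step.
Proof. by case; rewrite /ord_to_step /= inordK. Qed.
HB.instance Definition _ := Finite.copy step (can_type step_ordK).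

Definition horiz (s : step) : bool := match s with SR | SL => true | _ => false end.

Definition rot90 (s : step) : step :=
  match s with SU => SR | SR => SD | SD => SL | SL => SU end.

(* first steps of the maximal runs of steps of constant orientation *)
Fixpoint heads (prev : step) (s : seq step) : seq step :=
  match s with
  | [::] => [::]
  | x :: t => if horiz x == horiz prev then heads x t else x :: heads x t
  end.
Definition run_heads (s : seq step) : seq step :=
  match s with [::] => [::] | x :: t => x :: heads x t end.

(* block H_i V_i (by first steps h, v) -> diagonal, then rotated 45 deg clockwise:
   NE -> R, SE -> D, SW -> L, NW -> U *)
Definition block_code (h v : step) : step :=
  match h, v with
  | SR, SU => SR
  | SR, _ => SD
  | _, SD => SL
  | _, _ => SU
  end.

Fixpoint pair_blocks (l : seq step) : seq step :=
  match l with
  | h :: v :: t => block_code h v :: pair_blocks t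
  | _ => [::]
  end.

(* The reduction Phi_L (meaningful for paths of length >= 2) *)
Definition PhiL (s : seq step) : seq step :=
  let s1 := match s with
            | x :: _ => if horiz x then s else map rot90 s
            | [::] => [::] end in
  let s2 := match s1 with
            | x :: t => if horiz (last x t) then rcons (belast x t) (rot90 (last x t))
                        else s1
            | [::] => [::] end in
  pair_blocks (run_heads s2).

Fixpoint cdeg_fuel (fuel : nat) (s : seq step) : nat :=
  if size s <= 1 then 0 else
  match fuel with 0 => 0 | f.+1 => (cdeg_fuel f (PhiL s)).+1 end.

(* PhiL at least halves the length, so fuel = size s suffices. *)
Definition cdeg (s : seq step) : nat := cdeg_fuel (size s) s.

Definition binZ (m : nat) (k : int) : rat :=
  match k with Posz k' => ('C(m, k'))%:R | Negz _ => 0 end.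

(* Main.v *)
Require Import Defs.
From mathcomp Require Import all_boot all_order all_algebra.
From mathcomp Require Import ring lra zify.
Import Order.TTheory GRing.Theory Num.Theory.
Local Open Scope ring_scope.

Definition sum4 (G : step -> rat) : rat := G SU + G SR + G SD + G SL.

Fixpoint sumL (m : nat) (G : seq step -> rat) : rat :=
  if m is m'.+1 then sum4 (fun x => sumL m' (fun t => G (x :: t))) else G [::].

Lemma sum_step (G : step -> rat) : \sum_(x : step) G x = sum4 G.
Proof.
rewrite (reindex (ord_to_step)); last first.
  exists step_to_ord => x _.
    by apply: val_inj; case: x => -[|[|[|[|i]]]] //= Hi; rewrite inordK.
  exact: step_ordK.
by rewrite !big_ord_recl big_ord0 /sum4 /ord_to_step /= addr0 !addrA.
Qed.

Lemma sum_tuple (n : nat) (F : seq step -> rat) :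
  \sum_(p : n.-tuple step) F p = sumL n F.
Proof.
elim: n F => [|n IH] F.
  rewrite (big_pred1 [tuple]) // => p; rewrite [p]tuple0 /=; exact/esym/eqP.
have bij : bijective (fun xp : step * n.-tuple step => [tuple of xp.1 :: xp.2]).
  exists (fun p : n.+1.-tuple step => (thead p, [tuple of behead p])).
    by case=> x p /=; congr (_, _); apply: val_inj.
  move=> p; apply: val_inj => /=; by case: p => -[|x s] //.
rewrite (reindex _ (onW_bij _ bij)) /=.
rewrite -(pair_bigA _ (fun (x : step) (p : n.-tuple step) => F (x :: p))) /= sum_step.
by rewrite /sum4 (IH (fun t => F (SU :: t))) (IH (fun t => F (SR :: t))) (IH (fun t => F (SD :: t))) (IH (fun t => F (SL :: t))).
Qed.

Lemma sum4_ext f g : (forall x, f x = g x) -> sum4 f = sum4 g.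
Proof. by move=> H; rewrite /sum4 !H. Qed.

Lemma sumL_ext m G H : (forall s, size s = m -> G s = H s) -> sumL m G = sumL m H.
Proof.
elim: m G H => [|m IH] G H E /=; first exact: E.
apply: sum4_ext => x; apply: IH => s Hs; apply: E; by rewrite /= Hs.
Qed.

Lemma sumL_add m G H : sumL m (fun s => G s + H s) = sumL m G + sumL m H.
Proof.
elim: m G H => [|m IH] G H //=.
rewrite /sum4 !IH; ring.
Qed.

Lemma sumL_scale m c G : sumL m (fun s => c * G s) = c * sumL m G.
Proof.
elim: m G => [|m IH] G //=.
rewrite /sum4 !IH; ring.
Qed.

Lemma sumL_0 m : sumL m (fun _ => 0) = 0.
Proof. elim: m => [|m IH] //=; rewrite /sum4 IH; ring. Qed.

Lemma sumL_rot m G : sumL m (fun s => G (map rot90 s)) = sumL m G.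
Proof.
elim: m G => [|m IH] G //=.
rewrite /sum4 /=.
rewrite (IH (fun t => G (SR :: t))) (IH (fun t => G (SD :: t)))
        (IH (fun t => G (SL :: t))) (IH (fun t => G (SU :: t))).
ring.
Qed.

Lemma sumL_rcons m G :
  sumL m.+1 G = sumL m (fun t => sum4 (fun y => G (rcons t y))).
Proof.
elim: m G => [|m IH] G //=.
apply: sum4_ext => x; exact: (IH (fun t => G (x :: t))).
Qed.

Lemma heads_or a b u : horiz a = horiz b -> heads a u = heads b u.
Proof. by case: a; case: b => //; case: u. Qed.

Definition Pf (x : step) (u : seq step) := pair_blocks (x :: heads x u).
Definition Qf (v : step) (u : seq step) := pair_blocks (heads v u).
Definition vind (s : step) : rat := (~~ horiz s)%:R.

Definition Sp m (F : seq step -> rat) :=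
  sumL m (fun u => vind (last SR u) * (F (Pf SR u) + F (Pf SL u))).
Definition Sq m (F : seq step -> rat) :=
  sumL m (fun u => vind (last SU u) * F (Qf SU u)).

Lemma vind_last a b u : horiz a = horiz b -> vind (last a u) = vind (last b u).
Proof. by case: a; case: b => //; case: u. Qed.

Lemma Sq_rec m F : Sq m.+1 F = 2 * Sq m F + Sp m F.
Proof.
rewrite /Sq /Sp /= /sum4 /=.
have E1 u : Qf SU (SU :: u) = Qf SU u by [].
have E2 u : Qf SU (SD :: u) = Qf SU u by rewrite /Qf /= (heads_or SD SU u erefl).
have E3 u : Qf SU (SR :: u) = Pf SR u by [].
have E4 u : Qf SU (SL :: u) = Pf SL u by [].
rewrite (sumL_ext m (fun t => vind (last SD t) * F (Qf SU (SD :: t)))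
   (fun t => vind (last SU t) * F (Qf SU t))); last first.
  by move=> s _; rewrite E2 (vind_last SD SU s erefl).
rewrite (sumL_ext m (fun t => vind (last SL t) * F (Qf SU (SL :: t)))
   (fun t => vind (last SR t) * F (Pf SL t))); last first.
  by move=> s _; rewrite E4 (vind_last SL SR s erefl).
have -> : sumL m (fun t => vind (last SU t) * F (Qf SU (SU :: t))) =
  sumL m (fun u => vind (last SU u) * F (Qf SU u)) by [].
have -> : sumL m (fun t => vind (last SR t) * F (Qf SU (SR :: t))) =
  sumL m (fun u => vind (last SR u) * F (Pf SR u)) by [].
rewrite (sumL_ext m (fun u => vind (last SR u) * (F (Pf SR u) + F (Pf SL u)))
   (fun s => vind (last SR s) * F (Pf SR s) + vind (last SR s) * F (Pf SL s))); last first.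
  by move=> s _; ring.
rewrite sumL_add; ring.
Qed.

Lemma Sp_rec m F :
  Sp m.+1 F = 2 * Sp m F + sum4 (fun c => Sq m (fun w => F (c :: w))).
Proof.
rewrite /Sp /Sq /= /sum4 /=.
have hSD u : heads SD u = heads SU u by apply: heads_or.
have hSL u : heads SL u = heads SR u by apply: heads_or.
have -> : sumL m (fun t => vind (last SU t) * (F (Pf SR (SU :: t)) + F (Pf SL (SU :: t)))) =
  sumL m (fun u => vind (last SU u) * F (SR :: Qf SU u)) +
  sumL m (fun u => vind (last SU u) * F (SU :: Qf SU u)).
  rewrite -sumL_add; apply: sumL_ext => u _; rewrite /Pf /Qf /=; ring.
have -> : sumL m (fun t => vind (last SD t) * (F (Pf SR (SD :: t)) + F (Pf SL (SD :: t)))) =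
  sumL m (fun u => vind (last SU u) * F (SD :: Qf SU u)) +
  sumL m (fun u => vind (last SU u) * F (SL :: Qf SU u)).
  rewrite -sumL_add; apply: sumL_ext => u _.
  rewrite /Pf /Qf /= hSD (vind_last SD SU u erefl); ring.
have -> : sumL m (fun t => vind (last SR t) * (F (Pf SR (SR :: t)) + F (Pf SL (SR :: t)))) =
  sumL m (fun u => vind (last SR u) * (F (Pf SR u) + F (Pf SL u))).
  apply: sumL_ext => u _; rewrite /Pf /= hSL //.
have -> : sumL m (fun t => vind (last SL t) * (F (Pf SR (SL :: t)) + F (Pf SL (SL :: t)))) =
  sumL m (fun u => vind (last SR u) * (F (Pf SR u) + F (Pf SL u))).
  apply: sumL_ext => u _; rewrite /Pf /= hSL (vind_last SL SR u erefl) //.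
ring.
Qed.

Lemma Sp0 F : Sp 0 F = 0.
Proof. by rewrite /Sp /= /vind /= mul0r. Qed.

Lemma Sq0 F : Sq 0 F = F [::].
Proof. by rewrite /Sq /= /vind /= mul1r. Qed.

Fixpoint g (n m : nat) : rat :=
  match n, m with
  | 0, 0 => 1
  | 0, _ => 0
  | n'.+1, 0 => 0
  | n'.+1, m'.+1 => 2 * g n' m'.+1 + g n' m'
  end.

Lemma g_big n m : (n < m)%N -> g n m = 0.
Proof.
elim: n m => [|n IH] [|m] //= H.
by rewrite !IH ?mulr0 ?addr0 //; apply: ltnW.
Qed.

Lemma g_S n m : g n.+1 m.+1 = 2 * g n m.+1 + g n m.
Proof. by []. Qed.

Lemma g_S0 n : g n.+1 0 = 0.
Proof. by []. Qed.

Lemma sumL_S k F : sumL k.+1 F = sum4 (fun x => sumL k (fun t => F (x :: t))).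
Proof. by []. Qed.

Lemma g00 : g 0 0 = 1. Proof. by []. Qed.
Lemma g0S m : g 0 m.+1 = 0. Proof. by []. Qed.

Arguments g : simpl never.
Arguments sumL : simpl never.

Lemma S_closed m F :
  Sp m F = \sum_(k < m.+1) g m.+1 k.*2 * sumL k F /\
  Sq m F = \sum_(k < m.+1) g m.+1 k.*2.+1 * sumL k F.
Proof.
elim: m F => [|m IH] F.
  rewrite Sp0 Sq0 !big_ord1 /= g_S0 mul0r g_S g00 g0S; split => //.
  rewrite /sumL; ring.
split.
- rewrite Sp_rec (proj1 (IH F)).
  have -> : sum4 (fun c => Sq m (fun w => F (c :: w))) =
            \sum_(k < m.+1) g m.+1 k.*2.+1 * sumL k.+1 F.
    rewrite /sum4 !(fun c => proj2 (IH (fun w => F (c :: w)))) -!big_split /=.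
    by apply: eq_bigr => k _; rewrite sumL_S /sum4 !mulrDr.
  have A : \sum_(k < m.+1) g m.+1 k.*2 * sumL k F =
            \sum_(k < m.+1) g m.+1 k.+1.*2 * sumL k.+1 F.
    rewrite big_ord_recl /= g_S0 mul0r add0r [RHS]big_ord_recr /=.
    rewrite (g_big m.+1 m.+1.*2) ?mul0r ?addr0 //; rewrite -addnn; lia.
  rewrite A (big_ord_recl m.+1) /= mul0r add0r mulr_sumr -big_split /=.
  apply: eq_bigr => k _; rewrite doubleS [g m.+2 _]g_S /bump /= add1n.
  ring.
- rewrite Sq_rec (proj1 (IH F)) (proj2 (IH F)) [RHS]big_ord_recr /=.
  rewrite (g_big m.+2 m.+1.*2.+1) ?mul0r ?addr0; last by rewrite -addnn; lia.
  rewrite mulr_sumr -big_split /=; apply: eq_bigr => k _.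
  rewrite [g m.+2 _]g_S; ring.
Qed.

Definition Phi2 (s1 : seq step) : seq step :=
  pair_blocks (run_heads (match s1 with
            | x :: t => if horiz (last x t) then rcons (belast x t) (rot90 (last x t))
                        else s1
            | [::] => [::] end)).

Lemma PhiL_cons x t :
  PhiL (x :: t) = Phi2 (if horiz x then x :: t else rot90 x :: map rot90 t).
Proof. by rewrite /PhiL /Phi2; case: (horiz x). Qed.

Lemma Phi2_rcons x t y :
  Phi2 (x :: rcons t y) = Pf x (rcons t (if horiz y then rot90 y else y)).
Proof.
rewrite /Phi2 /= -/(last x (rcons t y)) last_rcons.
case: (horiz y) => //.
by rewrite -/(belast x (rcons t y)) belast_rcons.
Qed.

Definition Ux m F x := sumL m (fun t => F (Pf x (rcons t SU)) + F (Pf x (rcons t SD))).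

Lemma Tx m F x : sumL m.+1 (fun t => F (Phi2 (x :: t))) = 2 * Ux m F x.
Proof.
rewrite sumL_rcons /Ux -sumL_scale; apply: sumL_ext => t _.
rewrite /sum4 !Phi2_rcons /=; ring.
Qed.

Lemma Sp_U m F : Sp m.+1 F = Ux m F SR + Ux m F SL.
Proof.
rewrite /Sp sumL_rcons /Ux -sumL_add; apply: sumL_ext => t _.
rewrite /sum4 !last_rcons /vind /=; ring.
Qed.

Lemma PhiL_sum m F : sumL m.+2 (fun s => F (PhiL s)) = 4 * Sp m.+1 F.
Proof.
rewrite sumL_S /sum4 Sp_U.
have E x : sumL m.+1 (fun t => F (PhiL (x :: t))) =
    sumL m.+1 (fun t => F (Phi2 (if horiz x then x :: t else rot90 x :: map rot90 t))).
  by apply: sumL_ext => t _; rewrite PhiL_cons.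
rewrite !E /=.
rewrite (sumL_rot m.+1 (fun t => F (Phi2 (SR :: t)))).
rewrite (sumL_rot m.+1 (fun t => F (Phi2 (SL :: t)))).
rewrite !Tx; ring.
Qed.

Lemma size_pb_aux l : (size (pair_blocks l) * 2 <= size l)%N /\
   forall x, (size (pair_blocks (x :: l)) * 2 <= size (x :: l))%N.
Proof.
elim: l => [|y l [IH1 IH2]]; first by split => // x.
split; first exact: IH2.
move=> x /=; lia.
Qed.

Lemma size_heads p s : (size (heads p s) <= size s)%N.
Proof.
elim: s p => [|x t IH] p //=.
case: (_ == _) => /=; [apply: leq_trans (IH x) _ |]; by rewrite ?ltnS ?IH.
Qed.

Lemma size_run_heads l : (size (run_heads l) <= size l)%N.
Proof. by case: l => [|y u] //=; rewrite ltnS size_heads. Qed.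

Lemma size_Phi2 s : (size (Phi2 s) * 2 <= size s)%N.
Proof.
rewrite /Phi2; case: s => [|x t] //.
apply: leq_trans (proj1 (size_pb_aux _)) _.
apply: leq_trans (size_run_heads _) _.
case: (horiz _) => //; by rewrite size_rcons size_belast.
Qed.

Lemma size_PhiL s : (size (PhiL s) * 2 <= size s)%N.
Proof.
case: s => [|x t] //.
rewrite PhiL_cons; apply: leq_trans (size_Phi2 _) _.
by case: (horiz x) => //=; rewrite size_map.
Qed.

Lemma cdeg_fuel_stable f s : (size s <= f.+1)%N -> cdeg_fuel f.+1 s = cdeg_fuel f s.
Proof.
elim: f s => [|f IH] s Hs.
  by rewrite /= Hs.
rewrite [LHS]/= [RHS]/=.
case: ifP => // H1; congr S; apply: IH.
have := size_PhiL s; lia.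
Qed.

Lemma cdeg_fuel_mono k f s : (size s <= f.+1)%N -> cdeg_fuel (f + k) s = cdeg_fuel f s.
Proof.
move=> Hs; elim: k => [|k IH]; first by rewrite addn0.
by rewrite addnS cdeg_fuel_stable ?IH //; apply: leq_trans Hs _; rewrite ltnS leq_addr.
Qed.

Lemma cdeg_fuel_small f s : (size s <= 1)%N -> cdeg_fuel f s = 0%N.
Proof. by move=> H; case: f => [|f] /=; rewrite H. Qed.

Lemma cdeg_small s : (size s <= 1)%N -> cdeg s = 0%N.
Proof. exact: cdeg_fuel_small. Qed.

Lemma cdeg_fuel_S f s : (1 < size s)%N -> cdeg_fuel f.+1 s = (cdeg_fuel f (PhiL s)).+1.
Proof. by move=> H; rewrite /= leqNgt H. Qed.

Lemma cdeg_S s : (2 <= size s)%N -> cdeg s = (cdeg (PhiL s)).+1.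
Proof.
rewrite /cdeg => H.
case E: (size s) H => [|[|n]] // H.
rewrite cdeg_fuel_S ?E //; congr S.
have HP := size_PhiL s; rewrite E in HP.
case: (leqP (size (PhiL s)) 1) => H1.
  by rewrite !cdeg_fuel_small.
case E2: (size (PhiL s)) H1 => [|p] H1 //.
have -> : n.+1 = (p.+1 + (n - p))%N by lia.
by rewrite cdeg_fuel_mono // E2.
Qed.

Lemma cdeg_fuel_le f s : (cdeg_fuel f s <= f)%N.
Proof.
elim: f s => [|f IH] s /=; first by case: ifP.
by case: ifP => // _; rewrite ltnS.
Qed.

Lemma cdeg_le s : (cdeg s <= size s)%N.
Proof. exact: cdeg_fuel_le. Qed.

Definition fr n r := sumL n (fun s => (cdeg s == r)%:R).

Lemma fr_rec m r : fr m.+2 r.+1 = 4 * \sum_(k < m.+2) g m.+2 k.*2 * fr k r.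
Proof.
rewrite /fr (sumL_ext _ _ (fun s => (cdeg (PhiL s) == r)%:R)); last first.
  by move=> s Hs; rewrite cdeg_S ?Hs // eqSS.
by rewrite (PhiL_sum m (fun s => (cdeg s == r)%:R)) (proj1 (S_closed _ _)).
Qed.

Lemma fr_1 r : fr 1 r = 4 * (0 == r)%:R.
Proof. by rewrite /fr sumL_S /sum4 /sumL !cdeg_small //; ring. Qed.

Lemma fr_0 m : fr m.+2 0%N = 0.
Proof.
rewrite /fr (sumL_ext _ _ (fun _ => 0)) ?sumL_0 // => s Hs.
by rewrite cdeg_S ?Hs.
Qed.


Definition Rz (n i : nat) : rat :=
  binZ (2 * n).-1 (n%:Z - i%:Z) - binZ (2 * n).-1 (n%:Z - i%:Z - 1).

Lemma binZ_neg m (z : int) : (z < 0)%R -> binZ m z = 0.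
Proof. by case: z. Qed.

Lemma binZ_nat m k : binZ m k%:Z = ('C(m, k))%:R.
Proof. by []. Qed.

Lemma binZ_S m (z : int) : binZ m.+1 z = binZ m z + binZ m (z - 1).
Proof.
case: z => [[|k]|k] /=.
- by rewrite !bin0 addr0.
- by rewrite binS natrD subn1.
- by rewrite addr0.
Qed.

Lemma bd_rec M (z : int) :
  binZ M.+2 z - binZ M.+2 (z - 1) =
  (binZ M z - binZ M (z - 1)) + 2 * (binZ M (z - 1) - binZ M (z - 1 - 1))
  + (binZ M (z - 1 - 1) - binZ M (z - 1 - 1 - 1)).
Proof. rewrite !binZ_S; ring. Qed.

Lemma Rz_rec n i : (0 < n)%N -> Rz n.+1 i.+1 = Rz n i + 2 * Rz n i.+1 + Rz n i.+2.
Proof.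
move=> Hn; rewrite /Rz.
have -> : (2 * n.+1).-1 = ((2 * n).-1).+2 by lia.
have -> : n.+1%:Z - i.+1%:Z = n%:Z - i%:Z by lia.
have -> : n%:Z - i.+1%:Z = n%:Z - i%:Z - 1 by lia.
have -> : n%:Z - i.+2%:Z = n%:Z - i%:Z - 1 - 1 by lia.
by rewrite bd_rec.
Qed.

Lemma Rz1 i : Rz 1 i = (i == 1%N)%:R.
Proof.
rewrite /Rz /=.
by case: i => [|[|i]] //=.
Qed.

Lemma Rz_n0 n : (0 < n)%N -> Rz n 0 = 0.
Proof.
move=> Hn; rewrite /Rz subr0.
case: n Hn => [|n] // _.
have -> : n.+1%:Z - 1 = n%:Z by lia.
rewrite !binZ_nat -bin_sub; last by lia.
have -> : ((2 * n.+1)%R.-1 - n.+1)%N = n by lia.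
by rewrite subrr.
Qed.

Lemma Rz_big n i : (n < i)%N -> Rz n i = 0.
Proof. by move=> H; rewrite /Rz !binZ_neg ?subr0 //; lia. Qed.

Fixpoint W (N h : nat) : rat :=
  match N with
  | 0 => (h == 0%N)%:R
  | N'.+1 => match h with 0 => W N' 1 | h'.+1 => W N' h' + W N' h'.+2 end
  end.

Lemma W0 h : W 0 h = (h == 0%N)%:R. Proof. by []. Qed.
Lemma WS0 N : W N.+1 0 = W N 1. Proof. by []. Qed.
Lemma WSS N h : W N.+1 h.+1 = W N h + W N h.+2. Proof. by []. Qed.
Arguments W : simpl never.

Lemma W_odd N h : odd (N + h) -> W N h = 0.
Proof.
elim: N h => [|N IH] [|h] H.
- by [].
- by rewrite W0.
- by rewrite WS0 IH // addn1 -[N.+1]addn0.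
- rewrite WSS !IH ?addr0 //.
    by rewrite !addnS /= negbK; rewrite addSn addnS /= negbK in H.
  by rewrite addSn addnS /= negbK in H.
Qed.

Definition Rrec (X : nat -> nat -> rat) :=
  [/\ forall i, X 1%N i = (i == 1%N)%:R,
      forall n, (0 < n)%N -> X n 0%N = 0 &
      forall n i, (0 < n)%N -> X n.+1 i.+1 = X n i + 2 * X n i.+1 + X n i.+2].

Lemma Rrec_uniq X Y : Rrec X -> Rrec Y -> forall n i, (0 < n)%N -> X n i = Y n i.
Proof.
move=> [X1 X0 XS] [Y1 Y0 YS].
elim=> [|n IH] // i _.
case: n IH => [|n] IH; first by rewrite X1 Y1.
case: i => [|i]; first by rewrite X0 ?Y0.
by rewrite XS // YS // !IH.
Qed.

Lemma Rz_Rrec : Rrec Rz.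
Proof. split; [exact: Rz1 | exact: Rz_n0 | exact: Rz_rec]. Qed.

Definition Xw (n i : nat) : rat :=
  match i with 0 => 0 | i'.+1 => W (2 * n).-1 i'.*2.+1 end.

Lemma Xw_Rrec : Rrec Xw.
Proof.
split.
- by case=> [|[|i]] //=; rewrite WSS !W0 //= ?addr0 ?add0r.
- by [].
- move=> n [|i] Hn; rewrite /Xw.
  + have -> : (2 * n.+1).-1 = ((2 * n).-1).+2 by lia.
    rewrite WSS WS0 WSS; ring.
  + have -> : (2 * n.+1).-1 = ((2 * n).-1).+2 by lia.
    rewrite !WSS; ring.
Qed.

Definition Lw (n i : nat) : rat :=
  match i with 0 => 0 | i'.+1 => \sum_(m < n) g n m.+1 * W m i' end.

Lemma Lw_Rrec : Rrec Lw.
Proof.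
split.
- case=> [|i] //=; rewrite big_ord1 /= g_S g00 g0S W0.
  by case: i => [|i] /=; ring.
- by [].
- move=> n i Hn; rewrite /Lw.
  have -> : \sum_(m < n.+1) g n.+1 m.+1 * W m i =
     2 * (\sum_(m < n.+1) g n m.+1 * W m i) + \sum_(m < n.+1) g n m * W m i.
    rewrite mulr_sumr -big_split /=; apply: eq_bigr => m _; rewrite g_S; ring.
  rewrite big_ord_recr /= (g_big n n.+1) // mul0r addr0.
  rewrite big_ord_recl /=.
  case: n Hn => [|n] // _.
  rewrite g_S0 mul0r add0r.
  case: i => [|i].
    by rewrite add0r addrC; congr (_ + _); apply: eq_bigr => m _; rewrite WS0.
  rewrite -addrA addrC -addrA; congr (_ + _).
  by rewrite -big_split /=; apply: eq_bigr => m _; rewrite WSS; ring.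
Qed.

Lemma sum_ext_zero (f : nat -> rat) a b : (a <= b)%N ->
  (forall m, (a <= m)%N -> f m = 0) -> \sum_(m < b) f m = \sum_(m < a) f m.
Proof.
move=> Hab Hf.
rewrite -!(big_mkord xpredT) (big_cat_nat (n:=a)) //=.
rewrite [X in _ + X]big1_seq ?addr0 // => m /andP[_].
rewrite mem_index_iota => /andP[H1 _]; exact: Hf.
Qed.

Lemma sum_double (f : nat -> rat) N :
  \sum_(m < N.*2) f m = \sum_(k < N) (f k.*2 + f k.*2.+1).
Proof.
elim: N => [|N IH]; first by rewrite !big_ord0.
by rewrite doubleS !big_ord_recr /= IH addrA.
Qed.

Lemma Rz_Lw n i : (0 < n)%N -> Rz n i = Lw n i.
Proof. exact: (Rrec_uniq _ _ Rz_Rrec Lw_Rrec). Qed.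

Lemma Rz_Xw n i : (0 < n)%N -> Rz n i = Xw n i.
Proof. exact: (Rrec_uniq _ _ Rz_Rrec Xw_Rrec). Qed.

Lemma key n J : (0 < n)%N -> (0 < J)%N ->
  \sum_(k < n) g n k.*2 * Rz k J = Rz n J.*2.
Proof.
move=> Hn HJ.
case: J HJ => [|J] // _.
rewrite Rz_Lw // doubleS /Lw.
case: n Hn => [|n] // _.
rewrite big_ord_recl /= g_S0 mul0r add0r.
have E : \sum_(i < n) g n.+1 (bump 0 i).*2 * Rz (bump 0 i) J.+1 =
         \sum_(k < n.+1) g n.+1 k.*2.+2 * W k.*2.+1 J.*2.+1.
  rewrite big_ord_recr /= (g_big n.+1 n.*2.+2) ?mul0r ?addr0; last by lia.
  apply: eq_bigr => k _; rewrite /bump leq0n add1n Rz_Xw // /Xw.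
  by have -> : (2 * k.+1)%R.-1 = k.*2.+1 by lia.
rewrite E.
rewrite -(sum_ext_zero (fun m => g n.+1 m.+1 * W m J.*2.+1) (n.+1) (n.+1).*2); last first.
- by move=> m Hm; rewrite g_big ?mul0r.
- by lia.

rewrite (sum_double (fun m => g n.+1 m.+1 * W m J.*2.+1)); apply: eq_bigr => k _.
rewrite (W_odd k.*2) ?mulr0 ?add0r //.
by rewrite addnS /= oddD !odd_double.
Qed.

Definition cc (l : nat) : rat := l%:R * (-1) ^+ l.-1.

Lemma cc_comb l : (0 < l)%N -> cc l.+1 + 2 * cc l + cc l.-1 = 0.
Proof.
rewrite /cc; case: l => [|[|j]] // _.
change (j.+3%:R * (-1) ^+ j.+2 + 2 * (j.+2%:R * (-1) ^+ j.+1) + j.+1%:R * (-1) ^+ j = (0:rat)).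
rewrite !exprS -!natr1; ring.
Qed.

Lemma sum_shift1 (f : nat -> rat) N : f 0%N = 0 ->
  \sum_(l < N) f l.+1 = \sum_(l < N.+1) f l.
Proof. by move=> H; rewrite big_ord_recl H add0r. Qed.

Lemma Z_step n : (0 < n)%N -> \sum_(l < n.+2) cc l * Rz n.+1 l = 0.
Proof.
move=> Hn.
rewrite big_ord_recl /cc mul0r add0r -/cc.
have -> : \sum_(i < n.+1) cc (bump 0 i) * Rz n.+1 (bump 0 i) =
  \sum_(l < n.+1) cc l.+1 * Rz n l + \sum_(l < n.+1) 2 * cc l.+1 * Rz n l.+1
  + \sum_(l < n.+1) cc l.+1 * Rz n l.+2.
  rewrite -!big_split /=; apply: eq_bigr => l _.
  rewrite /bump leq0n add1n Rz_rec //; ring.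
rewrite (sum_shift1 (fun l => 2 * cc l * Rz n l)); last by rewrite /cc; ring.
rewrite (sum_ext_zero (fun l => 2 * cc l * Rz n l) n.+1 n.+2) //; last first.
  by move=> m Hm; rewrite Rz_big ?mulr0.
have -> : \sum_(l < n.+1) cc l.+1 * Rz n l.+2 =
          \sum_(l < n.+3) cc l.-1 * Rz n l.
  by rewrite !big_ord_recl Rz_n0 // /cc !mul0r !add0r.
rewrite (sum_ext_zero (fun l => cc l.-1 * Rz n l) n.+1 n.+3); last first.
  by move=> m Hm; rewrite Rz_big ?mulr0.
  by lia.
rewrite -!big_split big1 // => l _ /=.
case: (posnP l) => [->|Hl]; first by rewrite Rz_n0 //; ring.
by rewrite -!mulrDl (cc_comb l Hl) mul0r.
Qed.

Lemma Z_id n : (0 < n)%N -> \sum_(l < n.+1) cc l * Rz n l = (n == 1%N)%:R.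
Proof.
case: n => [|[|n]] // _.
  rewrite !big_ord_recl big_ord0 /= !Rz1 /cc /bump /=; ring.
exact: Z_step.
Qed.

Definition Gf n r : rat := 4 ^+ r.+1 * \sum_(l < n.+1) cc l * Rz n (l * 2 ^ r)%N.

Lemma Gf_ext n r N : (n.+1 <= N)%N ->
  Gf n r = 4 ^+ r.+1 * \sum_(l < N) cc l * Rz n (l * 2 ^ r)%N.
Proof.
move=> H; rewrite /Gf (sum_ext_zero (fun l => cc l * Rz n (l * 2 ^ r)%N) n.+1 N) //.
move=> m Hm; rewrite Rz_big ?mulr0 //.
apply: leq_trans Hm _; by rewrite leq_pmulr // expn_gt0.
Qed.

Lemma fr_Gf r n : (0 < n)%N -> fr n r = Gf n r.
Proof.
elim: r n => [|r IH] n Hn.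
- rewrite /Gf.
  under eq_bigr => l _ do rewrite expn0 muln1.
  rewrite Z_id //.
  case: n Hn => [|[|m]] // _.
  by rewrite fr_0 mulr0.
- case: n Hn => [|[|m]] // _.
    rewrite fr_1 /Gf !big_ord_recl big_ord0 /cc mul0r add0r mul1r.
    rewrite Rz_big ?mulr0 //.
    by rewrite /= mul1n -[1%N]/(2 ^ 0)%N ltn_exp2l.
  rewrite fr_rec.
  have -> : \sum_(k < m.+2) g m.+2 k.*2 * fr k r =
     \sum_(k < m.+2) g m.+2 k.*2 * (4 ^+ r.+1 * \sum_(l < m.+3) cc l * Rz k (l * 2 ^ r)%N).
    apply: eq_bigr => -[[|k] Hk] _ /=; first by rewrite g_S0 !mul0r.
    by rewrite IH // (Gf_ext _ _ m.+3) //; lia.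
  rewrite /Gf (exprS 4 r.+1) -mulrA; congr (_ * _).
  under eq_bigr => k _ do rewrite mulrCA.
  rewrite -mulr_sumr; congr (_ * _).
  under eq_bigr => k _ do rewrite mulr_sumr.
  rewrite exchange_big /=; apply: eq_bigr => l _.
  under eq_bigr => k _ do rewrite mulrCA.
  rewrite -mulr_sumr.
  case: (posnP l) => [->|Hl]; first by rewrite /cc !mul0r.
  congr (_ * _); rewrite key //; last by rewrite muln_gt0 Hl expn_gt0.
  by rewrite -muln2 -mulnA -expnSr.
Qed.


Definition phi (k : nat) : rat := 2 ^+ logn 2 k - 1.

Lemma phi_odd j : phi j.*2.+1 = 0.
Proof.
rewrite /phi; have -> : logn 2 j.*2.+1 = 0%N.
  apply/eqP; rewrite -leqn0 leqNgt logn_gt0 mem_primes /= dvdn2 /= odd_double.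
  by [].
by rewrite expr0 subrr.
Qed.

Lemma phi_even j : (0 < j)%N -> phi j.*2 = 2 * phi j + 1.
Proof.
move=> Hj; rewrite /phi -muln2 mulnC lognM // (logn_prime 2) // eqxx add1n exprS.
ring.
Qed.


Definition U n r := \sum_(j < n.+1) j%:R * Rz n (j * 2 ^ r)%N.
Definition T n r := \sum_(l < n.+1) cc l * Rz n (l * 2 ^ r)%N.
Definition Ph n r := \sum_(k < n.+1) k%:R * phi k * Rz n (k * 2 ^ r)%N.


Lemma sum_eo n (c : nat -> rat) r : c 0%N = 0 ->
  \sum_(l < n.+1) c l * Rz n (l * 2 ^ r)%N =
  \sum_(j < n.+1) (c j.*2 * Rz n (j * 2 ^ r.+1)%N + c j.*2.+1 * Rz n (j.*2.+1 * 2 ^ r)%N).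
Proof.
move=> c0.
rewrite -(sum_ext_zero (fun l => c l * Rz n (l * 2 ^ r)%N) n.+1 (n.+1).*2); last first.
- move=> m Hm; case: (posnP m) => [->|Hm0]; first by rewrite c0 mul0r.
  rewrite Rz_big ?mulr0 //; apply: leq_trans Hm _; by rewrite leq_pmulr // expn_gt0.
- by rewrite -addnn leq_addr.
rewrite (sum_double (fun l => c l * Rz n (l * 2 ^ r)%N)); apply: eq_bigr => j _.
by rewrite -muln2 -mulnA (mulnC 2%N) -expnSr.
Qed.

Lemma cc_even j : cc j.*2 = - (j.*2)%:R.
Proof.
rewrite /cc; case: j => [|j]; first by rewrite mul0r oppr0.
by rewrite doubleS /= exprS -signr_odd odd_double expr0 mulr1 mulrN1.
Qed.

Lemma cc_odd j : cc j.*2.+1 = (j.*2.+1)%:R.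
Proof. by rewrite /cc /= -signr_odd odd_double expr0 mulr1. Qed.

Lemma T_U n r : T n r = U n r - 4 * U n r.+1.
Proof.
have cc0 : cc 0 = 0 by rewrite /cc mul0r.
rewrite /T /U (sum_eo n cc r cc0) (sum_eo n (fun j => j%:R) r) //.
rewrite mulr_sumr -sumrB; apply: eq_bigr => j _.
rewrite cc_even cc_odd -muln2 natrM; ring.
Qed.

Lemma Ph_rec n r : Ph n r = 4 * Ph n r.+1 + 2 * U n r.+1.
Proof.
rewrite /Ph /U.
rewrite (sum_eo n (fun k => k%:R * phi k)) ?mul0r //.
rewrite !mulr_sumr -big_split; apply: eq_bigr => j _ /=.
rewrite phi_odd mulr0 mul0r addr0.
case: (posnP j) => [->|Hj]; first by rewrite !mul0r !mulr0; ring.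
rewrite phi_even // -muln2 natrM; ring.
Qed.

Lemma big_r_zero n (c : nat -> rat) r : c 0%N = 0 -> (n < 2 ^ r)%N ->
  \sum_(l < n.+1) c l * Rz n (l * 2 ^ r)%N = 0.
Proof.
move=> c0 Hr; apply: big1 => l _.
case: (posnP l) => [->|Hl]; first by rewrite c0 mul0r.
rewrite Rz_big ?mulr0 //; apply: leq_trans Hr _; by rewrite leq_pmull.
Qed.

Lemma tele n R : \sum_(r < R) r%:R * 4 ^+ r.+1 * T n r =
  \sum_(r < R) (0 < r)%N%:R * 4 ^+ r.+1 * U n r - (R.-1)%:R * 4 ^+ R.+1 * U n R.
Proof.
elim: R => [|R IH]; first by rewrite !big_ord0 /= !mul0r subr0.
rewrite !big_ord_recr /= IH T_U.
case: R {IH} => [|R] /=; first by rewrite !big_ord0; ring.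
rewrite !exprS -!natr1; ring.
Qed.

Lemma Ph_unroll n R : Ph n 0 = \sum_(r < R) 2 * 4 ^+ r * U n r.+1 + 4 ^+ R * Ph n R.
Proof.
elim: R => [|R IH]; first by rewrite big_ord0 expr0 mul1r add0r.
by rewrite big_ord_recr /= IH Ph_rec exprS; ring.
Qed.

Lemma Exp_main n : \sum_(r < n.+1) r%:R * 4 ^+ r.+1 * T n r = 8 * Ph n 0.
Proof.
rewrite tele (Ph_unroll n n).
have Hn : (n < 2 ^ n)%N by apply: ltn_expl.
have -> : U n n.+1 = 0.
  rewrite /U (big_r_zero n (fun j => j%:R)) //; apply: leq_trans Hn _; rewrite leq_exp2l //.
have -> : Ph n n = 0 by rewrite /Ph (big_r_zero n (fun k => k%:R * phi k)) // mul0r.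
rewrite big_ord_recl /= mul0r add0r !mulr0 subr0 addr0 mulr_sumr.
apply: eq_bigr => r _; rewrite /bump leq0n add1n /= !exprS; ring.
Qed.



Lemma sumL_sum m N (F : nat -> seq step -> rat) :
  sumL m (fun s => \sum_(r < N) F r s) = \sum_(r < N) sumL m (F r).
Proof.
elim: N => [|N IH].
  by rewrite big_ord0 (sumL_ext _ _ (fun _ => 0)) ?sumL_0 // => s _; rewrite big_ord0.
rewrite big_ord_recr /= -IH -sumL_add; apply: sumL_ext => s _.
by rewrite big_ord_recr.
Qed.

Lemma sum_delta N c : (c < N)%N -> \sum_(r < N) r%:R * (c == r)%:R = c%:R :> rat.
Proof.
move=> Hc; rewrite (bigD1 (Ordinal Hc)) //= eqxx mulr1 big1 ?addr0 // => i Hi.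
suff -> : (c == i) = false by rewrite mulr0.
apply/negbTE; apply: contra Hi => /eqP Ec; apply/eqP; apply: val_inj => /=; by rewrite Ec.
Qed.

Lemma sum_cdeg n :
  sumL n (fun s => (cdeg s)%:R) = \sum_(r < n.+1) r%:R * fr n r.
Proof.
rewrite /fr.
under eq_bigr => r _ do rewrite -sumL_scale.
rewrite -(sumL_sum n n.+1 (fun r s => r%:R * (cdeg s == r)%:R)); apply: sumL_ext => s Hs.
by rewrite sum_delta // ltnS -Hs cdeg_le.
Qed.

Theorem corollary2 (n : nat) : (1 <= n)%N ->
  (forall r : nat,
     (#|[set p : n.-tuple step | cdeg p == r]|%:R / (4 ^+ n) : rat)
     = (4 : rat) ^ ((r.+1)%:Z - n%:Z) *
       \sum_(0 <= l < n.+1)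
          (l%:R * (-1) ^+ l.-1 *
           (binZ (2 * n).-1 (n%:Z - (l * 2 ^ r)%N%:Z)
            - binZ (2 * n).-1 (n%:Z - (l * 2 ^ r)%N%:Z - 1))))
  /\
  ((\sum_(p : n.-tuple step) (cdeg p)%:R) / (4 ^+ n) : rat)
     = (4 ^+ n)^-1 *
       \sum_(1 <= k < n.+1)
          (8 * k%:R * (2 ^+ logn 2 k - 1) *
           (binZ (2 * n).-1 (n%:Z - k%:Z) - binZ (2 * n).-1 (n%:Z - k%:Z - 1))).
Proof.
move=> Hn; split.
- move=> r.
  have -> : #|[set p : n.-tuple step | cdeg p == r]|%:R =
            \sum_(p : n.-tuple step) (cdeg p == r)%:R :> rat.
    rewrite -sum1_card natr_sum big_mkcond /=; apply: eq_bigr => p _.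
    by rewrite inE; case: (_ == _).
  rewrite (sum_tuple n (fun s => (cdeg s == r)%:R)) -/(fr n r) fr_Gf // /Gf.
  rewrite big_mkord.
  rewrite exprzDr ?unitfE // -exprnN.
  change ((4:rat) ^ (Posz r.+1)) with ((4:rat) ^+ r.+1).
  rewrite mulrAC -mulrA; congr (_ * _); rewrite mulrC; congr (_ * _).
- rewrite (sum_tuple n (fun s => (cdeg s)%:R)) sum_cdeg.
  have -> : \sum_(r < n.+1) r%:R * fr n r = \sum_(r < n.+1) r%:R * 4 ^+ r.+1 * T n r.
    by apply: eq_bigr => r _; rewrite fr_Gf // /Gf /T mulrA.
  rewrite Exp_main mulrC; congr (_ * _).
  rewrite /Ph mulr_sumr.
  rewrite -(big_mkord xpredT (fun k => 8 * (k%:R * phi k * Rz n (k * 2 ^ 0)%N))).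
  rewrite big_ltn // mul0r mulr0 add0r.
  apply: eq_bigr => k _; rewrite expn0 muln1 /phi /Rz; ring.
Qed.
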